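(* IPR with $\rho=4$ terminates after at most $O(m^2)$ iterations of its while loop, where $m$ is the number of machines.
   Context: Jobs $j\in[n]$ have processing times $p_j\ge0$; for a bag $B$, $p(B)=\sum_{j\in B}p_j$. There are $m$ machines with predicted speeds $\hat s_1\ge\dots\ge\hat s_m$; $opt(\mathbf p,\hat{\mathbf s})$ is the minimum makespan $\max_i(\text{load of } i)/\hat s_i$ of assigning jobs to machines with speeds $\hat{\mathbf s}$. Algorithm IPR. Input: $\hat{\mathbf s}$, $\mathbf p$, $\alpha\in(0,1)$, accuracy $\epsilon\in(0,1)$, $\rho\ge1$. (1) Compute a partition $B_1,\dots,B_m$ with $p(B_1)\ge\dots\ge p(B_m)$ such that putting $B_i$ on machine $i$ has makespan at most $(1+\epsilon)opt(\mathbf p,\hat{\mathbf s})$ under speeds $\hat{\mathbf s}$. (2) Set $\overline{OPT}_C=\max_i p(B_i)/\hat s_i$ and tentative assignment $\mathcal M_i=\{B_i\}$. (3) While $\max\{p(B): B\in\cup_i\mathcal M_i, |B|\ge2\}>\rho\min\{p(B):B\in\cup_i\mathcal M_i\}$ (each execution of the loop body is an iteration): compute $\mathcal M'=$ LPT-Rebalance$(\mathcal M)$; if $\max_i\sum_{B\in\mathcal M'_i}p(B)/\hat s_i>(1+\alpha)\overline{OPT}_C$ return the current bags $\cup_i\mathcal M_i$; else $\mathcal M\leftarrow\mathcal M'$. (4) Return the bags $\cup_i\mathcal M_i$. LPT-Rebalance: let $B_{\min}$ be a bag of minimum $p(B)$ over all bags, $\mathcal M_{\min}$ its collection, $\mathcal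 M_{\max}$ a collection containing a bag of maximum $p(B)$ among bags with at least two jobs. Move $B_{\min}$ into $\mathcal M_{\max}$, let $\ell=|\mathcal M_{\max}|$, pool its jobs and redistribute them into $\ell$ new bags by LPT (jobs in non-increasing processing time, each into a currently least-loaded bag); these form the new $\mathcal M_{\max}$. *)

(* Defs.v *)
From mathcomp Require Import all_boot all_order all_algebra.
From mathcomp Require Import reals.
Set Implicit Arguments. Unset Strict Implicit. Unset Printing Implicit Defensive.
Import Order.TTheory GRing.Theory Num.Theory.
Local Open Scope ring_scope.

Section IPR.
Variables (R : realType) (n m : nat) (p : 'I_n -> R) (s : 'I_m -> R).

(* A bag is a list of jobs; a collection is a list of bags; a state (tentative
   assignment M) gives, for each machine i < m, its collection M_i. *)
Definition bag := seq 'I_n.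
Definition coll := seq bag.
Definition state := seq coll.

Definition pB (B : bag) : R := \sum_(j <- B) p j.

Definition bags (M : state) : seq bag := flatten M.

Definition load (M : state) (i : 'I_m) : R := \sum_(B <- nth [::] M i) pB B.

(* max_i (load of i) / s_i  (loads are nonnegative, so 0 is a neutral start) *)
Definition makespan_state (M : state) : R :=
  \big[Num.max/0]_(i < m) (load M i / s i).

Definition makespan_assign (a : {ffun 'I_n -> 'I_m}) : R :=
  \big[Num.max/0]_(i < m) ((\sum_(j | a j == i) p j) / s i).

Definition is_opt (v : R) : Prop :=
  (exists a, makespan_assign a = v) /\ (forall a, v <= makespan_assign a).

(* Loop condition:  max{p(B) : |B| >= 2} > rho * min{p(B)} over all bags *)
Definition loop_cond (rho : R) (M : state) : Prop :=
  exists B1 B2, B1 \in bags M /\ (2 <= size B1)%N /\ B2 \in bags M /\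
                rho * pB B2 < pB B1.

Definition rem_at (T : Type) (k : nat) (c : seq T) : seq T :=
  take k c ++ drop k.+1 c.

Inductive lpt_run : seq bag -> seq 'I_n -> seq bag -> Prop :=
| lpt_done bs : lpt_run bs [::] bs
| lpt_step bs j js k bs' :
    (k < size bs)%N ->
    (forall k', (k' < size bs)%N -> pB (nth [::] bs k) <= pB (nth [::] bs k')) ->
    lpt_run (set_nth [::] bs k (rcons (nth [::] bs k) j)) js bs' ->
    lpt_run bs (j :: js) bs'.

Definition LPT (jobs : seq 'I_n) (l : nat) (out : seq bag) : Prop :=
  exists js, perm_eq js jobs /\ sorted (fun a b => p b <= p a) js /\
             lpt_run (nseq l [::]) js out.

(* M' is a possible result of LPT-Rebalance(M). Bag B_min is the kmin-th bag
   of collection imin; collection imax contains a bag (the kmax-th) of maximum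
   p(B) among bags with at least two jobs. *)
Definition rebalance (M M' : state) : Prop :=
  exists imin kmin imax kmax,
  let Bmin := nth [::] (nth [::] M imin) kmin in
  let Bmax := nth [::] (nth [::] M imax) kmax in
  (imin < size M)%N /\ (kmin < size (nth [::] M imin))%N /\
  (forall B, B \in bags M -> pB Bmin <= pB B) /\
  (imax < size M)%N /\ (kmax < size (nth [::] M imax))%N /\
  (2 <= size Bmax)%N /\
  (forall B, B \in bags M -> (2 <= size B)%N -> pB B <= pB Bmax) /\
  let M1 := if imin == imax then M
            else set_nth [::] (set_nth [::] M imin (rem_at kmin (nth [::] M imin)))
                   imax (rcons (nth [::] M imax) Bmin) in
  let Cmax := nth [::] M1 imax in
  exists out, LPT (flatten Cmax) (size Cmax) out /\ M' = set_nth [::] M1 imax out.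

Definition init_partition (eps : R) (Bs : seq bag) : Prop :=
  size Bs = m /\ perm_eq (flatten Bs) (enum 'I_n) /\
  sorted (fun B1 B2 => pB B2 <= pB B1) Bs /\
  exists v, is_opt v /\
    (forall i : 'I_m, pB (nth [::] Bs i) / s i <= (1 + eps) * v).

Definition OPTC (Bs : seq bag) : R :=
  \big[Num.max/0]_(i < m) (pB (nth [::] Bs i) / s i).

(* Some run of IPR(s, p, alpha, eps, rho) executes at least k iterations of the
   while loop: the states M_0, ..., M_{k-1} at the start of iterations 1..k are
   reachable, each iteration t < k-1 passed the check and did not return, and the
   loop condition holds at M_{k-1} (so the k-th iteration is executed). *)
Definition executes_iterations (alpha eps rho : R) (k : nat) : Prop :=
  exists Bs, init_partition eps Bs /\
  exists Ms : nat -> state,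
    Ms 0%N = map (fun B => [:: B]) Bs /\
    (forall t, (t.+1 < k)%N ->
       loop_cond rho (Ms t) /\ rebalance (Ms t) (Ms t.+1) /\
       makespan_state (Ms t.+1) <= (1 + alpha) * OPTC Bs) /\
    ((0 < k)%N -> loop_cond rho (Ms k.-1)).

End IPR.

(* Main.v *)
Require Import Defs.
From mathcomp Require Import all_boot all_order all_algebra.
From mathcomp Require Import reals.
From mathcomp Require Import lra zify.
Set Implicit Arguments. Unset Strict Implicit. Unset Printing Implicit Defensive.
Import Order.TTheory GRing.Theory Num.Theory.
Local Open Scope ring_scope.

Lemma mem_set_nth_inv (T : eqType) (x0 : T) (s : seq T) k y x :
  (k < size s)%N -> x \in set_nth x0 s k y -> x = y \/ x \in s.
Proof.
move=> hk; rewrite set_nthE hk mem_cat in_cons.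
case/orP=> [/mem_take ->|/orP [/eqP ->|/mem_drop ->]]; by [right|left].
Qed.

Lemma mem_flatten_set_nth (T : eqType) (s : seq (seq T)) k y x :
  (k < size s)%N -> x \in flatten (set_nth [::] s k y) -> x \in y \/ x \in flatten s.
Proof.
move=> hk /flattenP [c hc hx].
case: (mem_set_nth_inv hk hc) => [Hc|Hc]; first by left; rewrite -Hc.
by right; apply/flattenP; exists c.
Qed.

Lemma perm_flatten_set_nth (T : eqType) (s : seq (seq T)) k j :
  (k < size s)%N ->
  perm_eq (flatten (set_nth [::] s k (rcons (nth [::] s k) j))) (flatten s ++ [:: j]).
Proof.
move=> hk; rewrite set_nthE hk.
have -> : flatten s = flatten (take k s ++ nth [::] s k :: drop k.+1 s).
  by rewrite -drop_nth // cat_take_drop.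
rewrite !flatten_cat /= -!catA perm_cat2l -cats1 -!catA perm_cat2l.
by rewrite perm_catC.
Qed.

Lemma mem_rem_at (T : eqType) k (c : seq T) x : x \in rem_at k c -> x \in c.
Proof. by rewrite /rem_at mem_cat => /orP [/mem_take|/mem_drop]. Qed.

Lemma size_rem_at (T : Type) k (c : seq T) : (k < size c)%N -> size (rem_at k c) = (size c).-1.
Proof. move=> hk; rewrite /rem_at size_cat size_takel ?size_drop; lia. Qed.

Lemma mem_bags n (M : state n) i B : B \in nth [::] M i -> B \in bags M.
Proof.
case: (ltnP i (size M)) => h; last by rewrite nth_default.
by move=> hB; apply/flattenP; exists (nth [::] M i) => //; apply: mem_nth.
Qed.

Lemma bagsP n (M : state n) B : B \in bags M -> exists i, (i < size M)%N /\ B \in nth [::] M i.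
Proof.
case/flattenP => c /(nthP [::]) [i hi <-] hB; by exists i.
Qed.

Lemma size_nth_flatten (T : Type) (M : seq (seq T)) i : (size (nth [::] M i) <= size (flatten M))%N.
Proof.
elim: M i => [|c M IH] [|i] //=; rewrite size_cat; first lia.
by have := IH i; lia.
Qed.

Lemma size_flatten_set_nth (T : Type) (M : seq (seq T)) i c : (i < size M)%N ->
  size (flatten (set_nth [::] M i c)) = (size (flatten M) + size c - size (nth [::] M i))%N.
Proof.
elim: M i => [|d M IH] [|i] //= hi; rewrite !size_cat; first lia.
rewrite IH //; have := size_nth_flatten M i; lia.
Qed.




Lemma pB_ge0 (R : realType) n (p : 'I_n -> R) B : (forall j, 0 <= p j) -> 0 <= pB p B.
Proof. by move=> h; apply: sumr_ge0. Qed.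

Lemma pB_rcons (R : realType) n (p : 'I_n -> R) B j : pB p (rcons B j) = pB p B + p j.
Proof. by rewrite /pB big_rcons. Qed.

Lemma pB_mem (R : realType) n (p : 'I_n -> R) B x : (forall j, 0 <= p j) -> x \in B -> p x <= pB p B.
Proof.
move=> h0 hx; rewrite /pB (big_rem x hx) /= lerDl; exact: sumr_ge0.
Qed.



Definition ge_all (R : realType) n (p : 'I_n -> R) (bs : seq (bag n)) (js : seq 'I_n) :=
  forall x y, x \in flatten bs -> y \in js -> p y <= p x.
Definition inv_e (R : realType) n (p : 'I_n -> R) (bs : seq (bag n)) :=
  forall B B0 j, B \in bs -> B = rcons B0 j -> forall B', B' \in bs -> pB p B0 <= pB p B'.
Definition inv_f (R : realType) n (p : 'I_n -> R) (bs : seq (bag n)) :=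
  forall B B0 j, B \in bs -> B = rcons B0 j -> forall x, x \in B0 -> p j <= p x.

Lemma lpt_inv (R : realType) n (p : 'I_n -> R) bs js out :
  (forall j, 0 <= p j) ->
  lpt_run p bs js out -> sorted (fun a b => p b <= p a) js -> ge_all p bs js ->
  inv_e p bs -> inv_f p bs ->
  [/\ inv_e p out, inv_f p out, size out = size bs & perm_eq (flatten out) (flatten bs ++ js)].
Proof.
move=> h0; elim => {bs js out} [bs|bs j js k bs' hk hmin hrun IH] hs hge he hf.
  by split=> //; rewrite cats0.
set N := nth [::] bs k.
set bs1 := set_nth [::] bs k (rcons N j).
have trans : transitive (fun a b : 'I_n => p b <= p a).
  by move=> b a c h1 h2; apply: le_trans h2 h1.
have hjs : all (fun y => p y <= p j) js by exact: order_path_min trans hs.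
have hN : N \in bs by exact: mem_nth.
have hNflat : forall x, x \in N -> x \in flatten bs.
  by move=> x hx; apply/flattenP; exists N.
have hlow : forall B', B' \in bs1 -> exists2 B'', B'' \in bs & pB p B'' <= pB p B'.
  move=> B' /(mem_set_nth_inv hk) [->|hB']; last by exists B'.
  by exists N => //; rewrite pB_rcons lerDl.
have hNmin : forall B'', B'' \in bs -> pB p N <= pB p B''.
  by move=> B'' /(nthP [::]) [k' hk' <-]; apply: hmin.
have hge1 : ge_all p bs1 js.
  move=> x y /(mem_flatten_set_nth hk) [].
    rewrite mem_rcons in_cons => /orP [/eqP ->|hx] hy; first exact: (allP hjs).
    by apply: hge; [apply: hNflat | rewrite in_cons hy orbT].
  by move=> hx hy; apply: hge => //; rewrite in_cons hy orbT.
have he1 : inv_e p bs1.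
  move=> B B0 j' /(mem_set_nth_inv hk) [-> E|hB E] B' /hlow [B'' hB'' le''].
    case: (rcons_inj E) => <- _.
    exact: le_trans (hNmin _ hB'') le''.
  exact: le_trans (he _ _ _ hB E _ hB'') le''.
have hf1 : inv_f p bs1.
  move=> B B0 j' /(mem_set_nth_inv hk) [-> E|hB E] x hx; last exact: hf hB E x hx.
  case: (rcons_inj E) => E1 <-; rewrite -E1 in hx.
  by apply: hge; [apply: hNflat | rewrite in_cons eqxx].
have [he' hf' hsz hperm] := IH (path_sorted hs) hge1 he1 hf1.
split=> //.
    by rewrite hsz size_set_nth; apply/maxn_idPr.
  apply: perm_trans hperm _.
  by rewrite -cat1s catA perm_cat2r; apply: perm_flatten_set_nth.
Qed.



Lemma out_I (R : realType) n (p : 'I_n -> R) out :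
  (forall j, 0 <= p j) -> inv_e p out -> inv_f p out ->
  forall B B', B \in out -> B' \in out -> (2 <= size B)%N -> pB p B <= 2 * pB p B'.
Proof.
move=> h0 he hf B B' hB hB'; case/lastP E: B => [|B0 l] //.
rewrite size_rcons; case: B0 E => [|x B1] // E _.
have h1 := he _ _ _ hB E _ hB'.
have h2 := hf _ _ _ hB E x (mem_head _ _).
have h3 := pB_mem (B := x :: B1) h0 (mem_head _ _).
rewrite pB_rcons; lra.
Qed.

Lemma out_small (R : realType) n (p : 'I_n -> R) out :
  (forall j, 0 <= p j) -> inv_e p out ->
  forall B Bm, B \in out -> Bm \in out -> (forall x, x \in B -> p x <= pB p Bm) ->
  pB p B <= 2 * pB p Bm.
Proof.
move=> h0 he B Bm hB hBm hx; have hv := pB_ge0 Bm h0.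
case/lastP E: B => [|B0 l]; first by rewrite {1}/pB big_nil; lra.
have h1 := he _ _ _ hB E _ hBm.
have h2 : p l <= pB p Bm by apply: hx; rewrite E mem_rcons mem_head.
rewrite pB_rcons; lra.
Qed.

Lemma out_big (R : realType) n (p : 'I_n -> R) out :
  (forall j, 0 <= p j) -> inv_e p out -> inv_f p out ->
  forall B Bm x, B \in out -> Bm \in out -> x \in B -> pB p Bm < p x -> (size B <= 1)%N.
Proof.
move=> h0 he hf B Bm x hB hBm hx hlt; rewrite leqNgt; apply/negP => hs.
case/lastP E: B hs hx => [|B0 l] //.
rewrite size_rcons; case: B0 E => [|y B1] // E _.
have h1 := he _ _ _ hB E _ hBm.
have h3 := pB_mem (B := y :: B1) h0 (mem_head _ _).
rewrite mem_rcons in_cons => /orP [/eqP Ex|hx].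
  have h2 := hf _ _ _ hB E y (mem_head _ _); rewrite -Ex in h2; lra.
have h4 := pB_mem (B := y :: B1) h0 (hx : x \in y :: B1); lra.
Qed.



Lemma sum_le_seq (R : realType) (T : eqType) (s : seq T) (F G : T -> R) :
  (forall B, B \in s -> F B <= G B) -> \sum_(B <- s) F B <= \sum_(B <- s) G B.
Proof. by move=> h; rewrite big_seq [X in _ <= X]big_seq; apply: ler_sum. Qed.

Lemma sum_if_count (R : realType) (T : Type) (s : seq T) (P : pred T) (c : R) :
  \sum_(B <- s) (if P B then 0 else c) = (count (predC P) s)%:R * c.
Proof.
elim: s => [|x s IH]; first by rewrite big_nil mul0r.
rewrite big_cons IH /=; case: (P x) => /=; rewrite ?add0n ?add0r //.
by rewrite natrD mulrDl mul1r.
Qed.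

Lemma count_has_flatten (T : Type) (a : pred T) (ss : seq (seq T)) :
  (count (has a) ss <= count a (flatten ss))%N.
Proof.
elim: ss => [|B ss IH] //=; rewrite count_cat.
by apply: leq_add => //; rewrite has_count; case: (count a B).
Qed.

Lemma count_has_flatten_eq (T : eqType) (a : pred T) (ss : seq (seq T)) :
  (forall B, B \in ss -> count a B = has a B) ->
  count (has a) ss = count a (flatten ss).
Proof.
elim: ss => [|B ss IH] //= h; rewrite count_cat h ?mem_head // IH //.
by move=> B' hB'; apply: h; rewrite in_cons hB' orbT.
Qed.

Lemma flatten_nseq_nil (T : Type) l : flatten (nseq l ([::] : seq T)) = [::].
Proof. by elim: l. Qed.

Lemma lpt_min (R : realType) n (p : 'I_n -> R) js out (X : seq (bag n)) Bmin a :
  (forall j, 0 <= p j) -> 0 <= a ->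
  lpt_run p (nseq (size X).+1 [::]) js out -> sorted (fun a b => p b <= p a) js ->
  perm_eq js (flatten (rcons X Bmin)) ->
  (forall B, B \in X -> 2 * a <= pB p B) -> a <= pB p Bmin ->
  forall Bm, Bm \in out -> a <= pB p Bm.
Proof.
move=> h0 ha hrun hs hperm hX hBmin.
have [he hf hsz hpo] : [/\ inv_e p out, inv_f p out, size out = size (nseq (size X).+1 ([::] : bag n))
   & perm_eq (flatten out) (flatten (nseq (size X).+1 [::]) ++ js)].
  apply: lpt_inv => //.
  - by move=> x y; rewrite flatten_nseq_nil.
  - by move=> B B0 j; rewrite mem_nseq => /andP [_ /eqP ->]; case: B0.
  - by move=> B B0 j; rewrite mem_nseq => /andP [_ /eqP ->]; case: B0.
rewrite flatten_nseq_nil /= in hpo; rewrite size_nseq in hsz.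
move=> Bm hBm; set v := pB p Bm.
have hv : 0 <= v by apply: pB_ge0.
pose big := fun x : 'I_n => v < p x.
pose g := fun B : bag n => \sum_(x <- B | ~~ big x) p x.
have gflat : forall ss : seq (bag n), \sum_(B <- ss) g B = \sum_(x <- flatten ss | ~~ big x) p x.
  by move=> ss; rewrite big_flatten.
have gnobig : forall B : bag n, ~~ has big B -> g B = pB p B.
  move=> B hB; rewrite /g -big_filter; congr (\sum_(x <- _) _).
  by apply/all_filterP; rewrite -all_predC in hB.
have hSeq : \sum_(B <- out) g B = \sum_(B <- rcons X Bmin) g B.
  rewrite !gflat; apply: perm_big; exact: perm_trans hpo hperm.
have nobigBm : ~~ has big Bm.
  by apply/hasPn => x hx; rewrite /big -leNgt; apply: pB_mem.
pose c := fun B : bag n => if has big B then 0 else 2 * v.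
have hgc : forall B, B \in out -> g B <= c B.
  move=> B hB; rewrite /c; case: ifP => hb.
    case/hasP: hb => x hx hbx.
    have := out_big h0 he hf hB hBm hx hbx.
    case: B hB hx => [|y [|z B']] // hB; rewrite in_cons in_nil orbF => /eqP Exy.
    by rewrite /g big_cons big_nil -Exy hbx.
  rewrite gnobig ?hb //; apply: (out_small h0 he hB hBm) => x hx.
  by move/hasPn: (negbT hb) => /(_ x hx); rewrite /big -leNgt.
set qo := count (predC (has big)) out.
have hout : \sum_(B <- out) g B <= qo%:R * (2 * v) - v.
  rewrite -sum_if_count (big_rem Bm hBm) [X in _ <= X - _](big_rem Bm hBm) /=.
  have -> : (if has big Bm then 0 else 2 * v) = 2 * v by rewrite (negbTE nobigBm).
  rewrite gnobig //.
  have : \sum_(y <- rem Bm out) g y <= \sum_(y <- rem Bm out) c y.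
    by apply: sum_le_seq => B hB; apply: hgc; exact: mem_rem hB.
  rewrite /c -/v; lra.
set qp := count (predC (has big)) (rcons X Bmin).
have hP : qp%:R * (2 * a) - a <= \sum_(B <- rcons X Bmin) g B.
  rewrite big_rcons /= /qp -cats1 count_cat /= addn0 natrD.
  have : (count (predC (has big)) X)%:R * (2 * a) <= \sum_(B <- X) g B.
    rewrite -sum_if_count; apply: sum_le_seq => B hB; case: ifP => hb.
      by apply: sumr_ge0.
    by rewrite gnobig ?hb //; apply: hX.
  have hg0 : 0 <= g Bmin by apply: sumr_ge0.
  case: (boolP (has big Bmin)) => hb /=.
    by rewrite ?add0r; lra.
  by rewrite gnobig //; lra.
have hcnt_out : count (has big) out = count big js.
  rewrite count_has_flatten_eq; first exact: (permP hpo) big.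
  move=> B hB; case: (boolP (has big B)) => hb.
    case/hasP: (hb) => x hx hbx.
    have := out_big h0 he hf hB hBm hx hbx.
    case: B hB hx hb => [|y [|z B']] // hB; rewrite in_cons in_nil orbF => /eqP Exy.
    by rewrite -Exy /= hbx.
  by apply/eqP; rewrite eqn0Ngt -has_count.
have hcnt_P : (count (has big) (rcons X Bmin) <= count big js)%N.
  rewrite ((permP hperm) big); exact: count_has_flatten.
have hqo : qo = (size out - count (has big) out)%N.
  by rewrite /qo -(count_predC (has big) out) addKn.
have hqp : qp = (size (rcons X Bmin) - count (has big) (rcons X Bmin))%N.
  by rewrite /qp -(count_predC (has big) (rcons X Bmin)) addKn.
have hqo1 : (1 <= qo)%N.
  by rewrite /qo -has_count; apply/hasP; exists Bm.
have hqq : (qo <= qp)%N by rewrite hqo hqp size_rcons hsz; lia.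
have hqo1R : 1 <= qo%:R :> R by rewrite ler1n.
have hqqR : qo%:R <= qp%:R :> R by rewrite ler_nat.
rewrite hSeq in hout.
set Q := qo%:R in hout hqo1R hqqR; set P := qp%:R in hP hqqR.
nra.
Qed.



Lemma lpt_nseq (R : realType) n (p : 'I_n -> R) l js out :
  (forall j, 0 <= p j) ->
  lpt_run p (nseq l [::]) js out -> sorted (fun a b => p b <= p a) js ->
  [/\ inv_e p out, inv_f p out, size out = l & perm_eq (flatten out) js].
Proof.
move=> h0 hrun hs.
have [] := lpt_inv h0 hrun hs.
- by move=> x y; rewrite flatten_nseq_nil.
- by move=> B B0 j; rewrite mem_nseq => /andP [_ /eqP ->]; case: B0.
- by move=> B B0 j; rewrite mem_nseq => /andP [_ /eqP ->]; case: B0.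
by rewrite size_nseq flatten_nseq_nil.
Qed.

Definition Inv (R : realType) n (p : 'I_n -> R) m (M : state n) (D : nat -> bool) : Prop :=
 [/\ size M = m, size (bags M) = m,
  forall i B B', B \in nth [::] M i -> B' \in nth [::] M i -> (2 <= size B)%N -> pB p B <= 2 * pB p B'
 & forall i B B', D i -> B \in nth [::] M i -> (2 <= size B)%N -> B' \in bags M -> pB p B <= 2 * pB p B'].

Definition Phi n m (M : state n) (D : nat -> bool) : nat :=
  \sum_(i < m) (if D i then size (nth [::] M i) else m).

Lemma sum_lt m (F' F : 'I_m -> nat) i0 :
  (forall i, (F' i <= F i)%N) -> (F' i0 < F i0)%N -> (\sum_(i < m) F' i < \sum_(i < m) F i)%N.
Proof.
move=> h h0; rewrite (bigD1 i0) // [X in (_ < X)%N](bigD1 i0) //=.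
rewrite -addSn; apply: leq_add => //; apply: leq_sum => i _; exact: h.
Qed.

Lemma arith1 m y x : (1 <= y)%N -> (y <= m)%N -> (m + y.-1 - y + x.+1 - x + x.+1 - x.+1)%N = m.
Proof. lia. Qed.

Lemma arith2 (b : bool) m y : (1 <= y)%N -> (y <= m)%N -> (y.-1 < (if b then y else m))%N.
Proof. case: b; lia. Qed.

Lemma step (R : realType) n m (p : 'I_n -> R) (M M' : state n) (D : nat -> bool) :
  (forall j, 0 <= p j) -> Inv p m M D -> loop_cond p 4 M -> rebalance p M M' ->
  exists D', Inv p m M' D' /\ (Phi m M' D' < Phi m M D)%N.
Proof.
move=> h0 [hsz hbsz hI hJ] [B1 [B2 [hB1 [hs1 [hB2 hlt]]]]] [imin [kmin [imax [kmax H]]]].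
cbv zeta in H.
case: H => himin [hkmin [hmin [himax [hkmax [hsmax [hmax H]]]]]].
set Y := nth [::] M imin in hkmin hmin H *.
set X := nth [::] M imax in hkmax hsmax hmax H *.
set Bmin := nth [::] Y kmin in hmin H *.
set Bmax := nth [::] X kmax in hsmax hmax.
set a := pB p Bmin.
have hBminY : Bmin \in Y by apply: mem_nth.
have hBmaxX : Bmax \in X by apply: mem_nth.
have hBminb : Bmin \in bags M by apply: mem_bags hBminY.
have ha0 : 0 <= a by apply: pB_ge0.
have h4a : 4 * a < pB p Bmax.
  have := hmin _ hB2; have := hmax _ hB1 hs1; rewrite -/a; lra.
have hneq : imin != imax.
  apply/eqP => E; have hBmaxY : Bmax \in Y by rewrite /Y E.
  have := hI imin Bmax Bmin hBmaxY hBminY hsmax; rewrite -/a; lra.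
have hDmax : D imax = false.
  apply/negbTE/negP => hd; have := hJ imax Bmax Bmin hd hBmaxX hsmax hBminb; rewrite -/a; lra.
rewrite (negbTE hneq) in H.
set M1 := set_nth [::] (set_nth [::] M imin (rem_at kmin Y)) imax (rcons X Bmin) in H.
have hC : nth [::] M1 imax = rcons X Bmin by rewrite /M1 nth_set_nth /= eqxx.
case: H => out [[js [hperm [hsorted hrun]]] ->].
rewrite hC size_rcons in hperm hrun.
have hnth : forall i, nth [::] (set_nth [::] M1 imax out) i =
    if i == imax then out else if i == imin then rem_at kmin Y else nth [::] M i.
  move=> i; rewrite /M1 nth_set_nth /= nth_set_nth /= nth_set_nth /=; by case: (i == imax).
have [he hf hszo hpo] := lpt_nseq h0 hrun hsorted.
have hX2a : forall B, B \in X -> 2 * a <= pB p B.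
  move=> B hB; have := hI imax Bmax B hBmaxX hB hsmax; lra.
have hmin_out : forall Bm, Bm \in out -> a <= pB p Bm.
  exact: (lpt_min h0 ha0 hrun hsorted hperm hX2a (lexx a)).
have hszM1 : size M1 = size M.
  by rewrite /M1 size_set_nth size_set_nth (maxn_idPr himin) (maxn_idPr himax).
have hA : forall B', B' \in bags (set_nth [::] M1 imax out) -> a <= pB p B'.
  move=> B' /bagsP [i [_]]; rewrite hnth; case: ifP => _; first exact: hmin_out.
  case: ifP => _ hB'; apply: hmin.
    by apply: (@mem_bags _ M imin); apply: mem_rem_at hB'.
  exact: mem_bags hB'.
have hY1 : (1 <= size Y)%N by exact: leq_ltn_trans (leq0n kmin) hkmin.
have hYm : (size Y <= m)%N by rewrite -hbsz; apply: size_nth_flatten.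
exists (fun i => D i || (i == imin)); split.
- split.
  + by rewrite size_set_nth hszM1 (maxn_idPr himax).
  + rewrite /bags size_flatten_set_nth ?hszM1 // hC hszo size_rcons /M1.
    rewrite size_flatten_set_nth ?size_set_nth; last by rewrite (maxn_idPr himin).
    rewrite nth_set_nth /= eq_sym (negbTE hneq) -/X size_flatten_set_nth //.
    rewrite size_rem_at // -/(bags M) hbsz -/Y size_rcons; exact: arith1.
  + move=> i B B'; rewrite !hnth; case: ifP => _; first exact: out_I.
    case: ifP => _; last exact: hI.
    by move=> /mem_rem_at hB /mem_rem_at hB'; exact: (hI imin).
  + move=> i B B' hD; rewrite hnth; case: ifP => [/eqP Ei|_].
      by rewrite Ei hDmax eq_sym (negbTE hneq) in hD.
    move=> hB hs hB'; have := hA B' hB'.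
    suff : pB p B <= 2 * a by lra.
    case: ifP hB => [_ /mem_rem_at hB|Ei hB]; first exact: (hI imin) hB hBminY hs.
    rewrite Ei orbF in hD; exact: hJ hD hB hs hBminb.
- have himin' : (imin < m)%N by rewrite -hsz.
  apply: (@sum_lt m _ _ (Ordinal himin')) => [i|] /=.
    rewrite hnth; case: (eqVneq (nat_of_ord i) imax) => [->|hi].
      by rewrite hDmax eq_sym (negbTE hneq).
    case: (eqVneq (nat_of_ord i) imin) => [->|hi'].
      by rewrite ?eqxx orbT size_rem_at //; apply: ltnW; apply: arith2.
    by rewrite orbF.
  by rewrite hnth eqxx (negbTE hneq) orbT size_rem_at //; apply: arith2.
Qed.



Lemma arith3 a t k mm : (a < k)%N -> (k + t <= mm)%N -> (a + t.+1 <= mm)%N.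
Proof. lia. Qed.

Lemma arith4 k P m : (P + k <= m * m)%N -> (0 < m)%N -> (k.+1 <= 2 * m ^ 2)%N.
Proof. rewrite -mulnn; nia. Qed.

Unset Implicit Arguments.

Theorem lemma9 (R : realType) :
  exists C : nat,
  forall (n m : nat) (p : 'I_n -> R) (s : 'I_m -> R) (alpha eps : R),
    (forall j, 0 <= p j) ->
    (forall i, 0 < s i) ->
    (forall i j : 'I_m, (i <= j)%N -> s j <= s i) ->
    0 < alpha < 1 -> 0 < eps < 1 ->
    forall k : nat, executes_iterations p s alpha eps 4 k -> (k <= C * m ^ 2)%N.
Proof.
exists 2%N => n m p s alpha eps h0 _ _ _ _ k [Bs [[hBsz _] [Ms [hM0 [hsteps hlast]]]]].
have inv0 : Inv p m (Ms 0%N) (fun _ => false).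
  rewrite hM0; split.
  - by rewrite size_map.
  - by rewrite /bags flatten_seq1.
  - move=> i B B'; case: (ltnP i (size Bs)) => hi; last by rewrite nth_default ?size_map.
    rewrite (nth_map [::]) // !mem_seq1 => /eqP -> /eqP -> _.
    have := pB_ge0 (nth [::] Bs i) h0; lra.
  - by [].
have Phi0 : Phi m (Ms 0%N) (fun _ => false) = (m * m)%N.
  by rewrite /Phi /= sum_nat_const card_ord.
have key : forall t, (t < k)%N -> exists D, Inv p m (Ms t) D /\ (Phi m (Ms t) D + t <= m * m)%N.
  elim=> [|t IH] ht.
    by exists (fun _ => false); split => //; rewrite Phi0 addn0.
  have [D [hinv hphi]] := IH (ltnW ht).
  have [hl [hr _]] := hsteps t ht.
  have [D' [hinv' hlt]] := step h0 hinv hl hr.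
  by exists D'; split => //; apply: arith3 hlt hphi.
case: k hlast key {hsteps} => [|k] // hlast key.
have [D [[_ hbsz _ _] hphi]] := key k (ltnSn k).
have [B1 [_ [hB1 _]]] := hlast isT.
have hm : (0 < m)%N by rewrite -hbsz; case: (bags (Ms k)) hB1.
exact: arith4 hphi hm.
Qed.
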